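(* Any two node-edge-checkable problems $P$ and $\Pi$ satisfy $\Pi\times\tau_P(\Pi)\xrightarrow{0}P$.
   Context: Fix $\Delta$. A node-edge-checkable problem $\Pi=(\Sigma_\Pi,\mathcal{N}_\Pi,\mathcal{E}_\Pi)$ has a finite label set, a node constraint $\mathcal{N}_\Pi$ (a set of cardinality-$\Delta$ multisets over $\Sigma_\Pi$) and an edge constraint $\mathcal{E}_\Pi$ (a set of cardinality-$2$ multisets). Relaxation. $\Pi\xrightarrow{0}\Pi'$ means there is a map $f$ with the following properties. For every $C=L_1\dots L_\Delta\in\mathcal{N}_\Pi$ and every $j$, $f$ assigns a label $f(C,j)\in\Sigma_{\Pi'}$. The map must satisfy: - $f(C,1)\dots f(C,\Delta)\in\mathcal{N}_{\Pi'}$; - whenever the $j$-th entry of $C$ and the $j'$-th entry of $C'$ form an element of $\mathcal{E}_\Pi$, then $f(C,j)f(C',j')\in\mathcal{E}_{\Pi'}$. Product. $\Pi\times\Pi'$ has labels $\Sigma_\Pi\times\Sigma_{\Pi'}$. Its node configurations are the multisets $(L_1,L'_1)\dots(L_\Delta,L'_\Delta)$ with $L_1\dots L_\Delta\in\mathcal{N}_\Pi$ and $L'_1\dots L'_\Delta\in\mathcal{N}_{\Pi'}$. Its edge configurations are defined analogously. The problem $\mathrm{R}^*(P)$ is defined as follows. - Labels are the nonempty subsets of $\Sigma_P$. - Node configurations are the $S_1\dots S_\Delta$ admitting $L_i\in S_i$ with $L_1\dots L_\Delta\in\mathcal{N}_P$. - Edge configurations are the $S_1S_2$ with $L_1L_2\in\mathcal{E}_P$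 for all $L_1\in S_1,L_2\in S_2$. The problem $\tau_P(\Pi)$ is defined as follows. - Labels are all functions $\Sigma_\Pi\to\Sigma_{\mathrm{R}^*(P)}$. - $f_1\dots f_\Delta$ is a node configuration iff $f_1(L_1)\dots f_\Delta(L_\Delta)\in\mathcal{N}_{\mathrm{R}^*(P)}$ for all $L_1\dots L_\Delta\in\mathcal{N}_\Pi$. - $f_1f_2$ is an edge configuration iff $f_1(L_1)f_2(L_2)\in\mathcal{E}_{\mathrm{R}^*(P)}$ for all $L_1L_2\in\mathcal{E}_\Pi$. *)

(* Defs.v *)
From mathcomp Require Import all_boot.
Set Implicit Arguments. Unset Strict Implicit. Unset Printing Implicit Defensive.

(* A configuration (multiset of cardinality Delta) is represented by a
   listing 'I_Delta -> label; the node constraint is required to be invariant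
   under reordering (see [wf_problem]), so it really is a set of multisets.
   Similarly the edge constraint is a symmetric relation (set of 2-multisets). *)
Record problem (Delta : nat) := Problem {
  lab : finType;
  node : ('I_Delta -> lab) -> Prop;
  edge : lab -> lab -> Prop }.
Arguments Problem {Delta}.
Arguments lab {Delta} p.
Arguments node {Delta} p _.
Arguments edge {Delta} p _ _.

Definition wf_problem Delta (P : problem Delta) : Prop :=
  (forall (C : 'I_Delta -> lab P) (s : 'I_Delta -> 'I_Delta),
      bijective s -> node P C -> node P (C \o s)) /\
  (forall a b, edge P a b -> edge P b a).

Definition relax0 Delta (Pi Pi' : problem Delta) : Prop :=
  exists f : {C : 'I_Delta -> lab Pi | node Pi C} -> 'I_Delta -> lab Pi',
    (forall C, node Pi' (f C)) /\
    (forall (C C' : {C : 'I_Delta -> lab Pi | node Pi C}) (j j' : 'I_Delta),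
        edge Pi (sval C j) (sval C' j') -> edge Pi' (f C j) (f C' j')).

Definition prod_problem Delta (Pi Pi' : problem Delta) : problem Delta :=
  @Problem Delta (lab Pi * lab Pi')%type
    (fun C => node Pi (fun i => (C i).1) /\ node Pi' (fun i => (C i).2))
    (fun a b => edge Pi a.1 b.1 /\ edge Pi' a.2 b.2).

Definition Rlab Delta (P : problem Delta) : finType :=
  {S : {set lab P} | S != set0}.

Definition Rstar Delta (P : problem Delta) : problem Delta :=
  @Problem Delta (Rlab P)
    (fun S => exists L : 'I_Delta -> lab P,
        (forall i, L i \in sval (S i)) /\ node P L)
    (fun S1 S2 => forall L1 L2, L1 \in sval S1 -> L2 \in sval S2 -> edge P L1 L2).

Definition tau Delta (P Pi : problem Delta) : problem Delta :=
  @Problem Delta {ffun lab Pi -> lab (Rstar P)}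
    (fun F => forall L : 'I_Delta -> lab Pi, node Pi L ->
        node (Rstar P) (fun i => F i (L i)))
    (fun f1 f2 => forall L1 L2, edge Pi L1 L2 -> edge (Rstar P) (f1 L1) (f2 L2)).

(* Main.v *)
Require Import Defs.
From mathcomp Require Import all_boot.
From Stdlib Require Import ClassicalEpsilon.

Theorem mainTheorem9 (Delta : nat) (P Pi : problem Delta) :
  wf_problem P -> wf_problem Pi ->
  relax0 (prod_problem Pi (tau P Pi)) P.
Proof.
move=> _ _.
have g : forall (C : {C : 'I_Delta -> lab (prod_problem Pi (tau P Pi)) |
           node (prod_problem Pi (tau P Pi)) C}),
  {L : 'I_Delta -> lab P |
     (forall i, L i \in sval ((sval C i).2 (sval C i).1)) /\ node P L}.
  move=> C; apply: constructive_indefinite_description.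
  case: C => C [HL HF] /=.
  exact: (HF _ HL).
exists (fun C => sval (g C)); split.
  by move=> C; case: (svalP (g C)).
move=> C C' j j' [He1 He2].
case: (svalP (g C)) => H1 _; case: (svalP (g C')) => H2 _.
exact: (He2 _ _ He1 _ _ (H1 j) (H2 j')).
Qed.
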